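(* Let $r\ge 1$ and let $M$ be a multigraph with $n$ nodes and at most $n-\frac{n}{r}$ edges. Then $M$ has a connected component with $k$ nodes and exactly $k-1$ edges for some $k$ with $1\le k\le r$. *)

(* Defs.v *)
From HB Require Import structures.
From mathcomp Require Import all_boot all_order all_algebra.
Set Implicit Arguments. Unset Strict Implicit. Unset Printing Implicit Defensive.
Import Order.TTheory GRing.Theory Num.Theory.

(* A (finite) multigraph on node set V with edge set E: edge e joins the
   nodes s e and t e.  Parallel edges are allowed (E is an arbitrary finite
   type); loops (s e = t e) are also allowed. *)

Definition mg_adj (V E : finType) (s t : E -> V) : rel V :=
  fun x y => [exists e, ((s e == x) && (t e == y)) || ((s e == y) && (t e == x))].

Definition mg_comp (V E : finType) (s t : E -> V) (x : V) : {set V} :=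
  [set y | connect (mg_adj s t) x y].

Definition mg_edges_in (V E : finType) (s t : E -> V) (C : {set V}) : {set E} :=
  [set e | (s e \in C) && (t e \in C)].

(* Main.v *)
Require Import Defs.
From HB Require Import structures.
From mathcomp Require Import all_boot all_order all_algebra.
From mathcomp Require Import lra.
Import Order.TTheory GRing.Theory Num.Theory.
Set Implicit Arguments. Unset Strict Implicit. Unset Printing Implicit Defensive.

Lemma adj_sym (V E : finType) (s t : E -> V) : symmetric (mg_adj s t).
Proof.
move=> x y; apply/existsP/existsP => [][e He]; exists e; by rewrite orbC.
Qed.

Lemma comp_sym (V E : finType) (s t : E -> V) x y :
  (y \in mg_comp s t x) = (x \in mg_comp s t y).
Proof. by rewrite !inE (sym_connect_sym (adj_sym s t)). Qed.

Lemma comp_eq (V E : finType) (s t : E -> V) x y :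
  y \in mg_comp s t x -> mg_comp s t y = mg_comp s t x.
Proof.
rewrite inE => H; apply/setP => z; rewrite !inE.
by rewrite (same_connect (sym_connect_sym (adj_sym s t)) H).
Qed.

Lemma adj_comp (V E : finType) (s t : E -> V) x a b :
  mg_adj s t a b -> a \in mg_comp s t x -> b \in mg_comp s t x.
Proof. rewrite !inE => Hab Ha; exact: connect_trans Ha (connect1 Hab). Qed.

Lemma grow (V E : finType) (s t : E -> V) x (A : {set V}) y :
  x \in A -> A \subset mg_comp s t x -> y \in mg_comp s t x -> y \notin A ->
  exists z e, [/\ z \in mg_comp s t x, z \notin A, e \notin mg_edges_in s t A
                  & e \in mg_edges_in s t (z |: A)].
Proof.
move=> xA sA yC yA.
case: (pickP [pred e | (s e \in A) != (t e \in A)]) => [e /= He | H0]; last first.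
  suff cl : closed (mg_adj s t) A.
    by move: yA; rewrite -(closed_connect cl (x:=x)) ?xA //; rewrite inE in yC.
  apply: intro_closed; first exact: sym_connect_sym (adj_sym s t).
  move=> a b /existsP [e /orP [] /andP [/eqP sa /eqP tb]] aA;
    have := H0 e; rewrite /= sa tb aA; by case: (b \in A).
have adj : mg_adj s t (s e) (t e) by apply/existsP; exists e; rewrite !eqxx.
have adj' : mg_adj s t (t e) (s e) by rewrite adj_sym.
case sA' : (s e \in A); case tA' : (t e \in A); rewrite sA' tA' /= in He => //.
- exists (t e), e; split => //.
  + exact: adj_comp adj (subsetP sA _ sA').
  + by rewrite tA'.
  + by rewrite inE tA' andbF.
  + by rewrite inE !in_setU1 sA' eqxx orbT.
- exists (s e), e; split => //.
  + exact: adj_comp adj' (subsetP sA _ tA').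
  + by rewrite sA'.
  + by rewrite inE sA'.
  + by rewrite inE !in_setU1 tA' eqxx orbT.
Qed.

Lemma tree_bound (V E : finType) (s t : E -> V) x :
  (#|mg_comp s t x|.-1 <= #|mg_edges_in s t (mg_comp s t x)|)%N.
Proof.
set C := mg_comp s t x.
have xC : x \in C by rewrite inE connect0.
have H : forall k, (k < #|C|)%N -> exists A : {set V},
    [/\ x \in A, A \subset C, #|A| = k.+1 & (k <= #|mg_edges_in s t A|)%N].
  elim => [|k IH] Hk.
    by exists [set x]; rewrite set11 sub1set xC cards1.
  have [A [xA sAC cA eA]] := IH (ltnW Hk).
  have : A \proper C by rewrite properEcard sAC cA.
  case/properP => _ [y yC yA].
  have [z [e [zC zA eA' eA'']]] := grow xA sAC yC yA.
  exists (z |: A); split.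
  - by rewrite in_setU1 xA orbT.
  - by rewrite subUset sub1set zC sAC.
  - by rewrite cardsU1 zA cA.
  - apply: leq_ltn_trans eA (proper_card _).
    apply/properP; split; last by exists e.
    apply/subsetP => f; rewrite !inE => /andP [h1 h2].
    by rewrite h1 h2 !orbT.
have C0 : (0 < #|C|)%N by apply/card_gt0P; exists x.
have [A [_ sAC cA eA]] := H #|C|.-1 ltac:(by rewrite prednK).
have -> : C = A.
  apply/eqP; rewrite eq_sym eqEcard sAC cA prednK //.
  by rewrite leqnn.
by rewrite cA.
Qed.

Local Open Scope ring_scope.

Lemma sum_w (R : numFieldType) (V E : finType) (s t : E -> V) :
  \sum_(x : V) (#|mg_edges_in s t (mg_comp s t x)|%:R / #|mg_comp s t x|%:R : R)
  = #|E|%:R.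
Proof.
transitivity (\sum_(x : V) \sum_(e : E)
  (if e \in mg_edges_in s t (mg_comp s t x) then #|mg_comp s t x|%:R^-1 else 0 : R)).
  apply: eq_bigr => x _; rewrite -big_mkcond /= sumr_const -[RHS]mulr_natl mulrC //.
rewrite exchange_big /=.
transitivity (\sum_(e : E) (1 : R)); last by rewrite sumr_const.
apply: eq_bigr => e _; rewrite -big_mkcond /=.
have adj : mg_adj s t (s e) (t e) by apply/existsP; exists e; rewrite !eqxx.
rewrite (eq_bigl (fun x => x \in mg_comp s t (s e))); last first.
  move=> x; rewrite inE; apply/andP/idP => [[h _] | h].
    by rewrite -comp_sym.
  split; first by rewrite comp_sym.
  by apply: adj_comp adj _; rewrite comp_sym.
rewrite (eq_bigr (fun _ => #|mg_comp s t (s e)|%:R^-1)); last first.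
  by move=> x xC; rewrite (comp_eq xC).
rewrite sumr_const (_ : forall (y : R) n, y *+ n = y * n%:R); last by move=> *; rewrite mulr_natr.
rewrite mulVf // pnatr_eq0 -lt0n.
by apply/card_gt0P; exists (s e); rewrite inE connect0.
Qed.

Theorem lemma10 (R : realFieldType) (r : R) (V E : finType) (s t : E -> V) :
  1 <= r ->
  (0 < #|V|)%N ->
  (#|E|%:R <= #|V|%:R - #|V|%:R / r) ->
  exists x : V, exists k : nat,
    [/\ (1 <= k)%N, k%:R <= r,
        #|mg_comp s t x| = k &
        #|mg_edges_in s t (mg_comp s t x)| = k.-1].
Proof.
move=> r1 n0 hE.
have kpos : forall x, (0 < #|mg_comp s t x|)%N.
  by move=> x; apply/card_gt0P; exists x; rewrite inE connect0.
case: (pickP [pred x | (#|mg_comp s t x|%:R <= r) &&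
     (#|mg_edges_in s t (mg_comp s t x)| == #|mg_comp s t x|.-1)])
  => [x /= /andP[h1 /eqP h2] | H0].
  by exists x, #|mg_comp s t x|; split.
exfalso.
have r0 : 0 < r by apply: lt_le_trans r1.
move: hE; apply/negP; rewrite -ltNge.
rewrite -(sum_w R s t).
have -> : #|V|%:R - #|V|%:R / r = \sum_(x:V) (1 - r^-1) :> R.
  by rewrite sumr_const -[RHS]mulr_natr mulrBl mul1r mulrC.
have [x0 _] := card_gt0P n0.
apply: ltr_sum; first by apply/hasP; exists x0; rewrite ?mem_index_enum.
move=> x _.
have := H0 x; have := tree_bound s t x; have := kpos x; rewrite /=.
set k := #|mg_comp s t x|; set e := #|mg_edges_in s t (mg_comp s t x)|.
move=> k0 tb hx.
have k0R : 0 < k%:R :> R by rewrite ltr0n.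
rewrite ltr_pdivlMr //.
set u := r^-1.
have ru : r * u = 1 by rewrite /u mulfV // gt_eqF.
have u0 : 0 < u by rewrite /u invr_gt0.
case: (leP (k%:R) r) => hk.
  rewrite hk /= in hx.
  have ke : (k <= e)%N.
    by move: hx tb; case: k k0 {k0R hk} => // k' _ /= hx tb; rewrite ltn_neqAle tb andbT eq_sym hx.
  have keR : k%:R <= e%:R :> R by rewrite ler_nat.
  nra.
have ke : (k <= e + 1)%N by move: tb; case: k k0 {k0R hk hx} => // k' _ /=; rewrite addn1.
have keR : k%:R <= e%:R + 1 :> R by rewrite -(natrD R e 1) ler_nat.
nra.
Qed.
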